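(* In an almost zero-dimensional space $X$, every closed $\sigma$C-set is a C-set.
   Context: All spaces are separable and metrizable. A subset $A$ of a space $X$ is a C-set in $X$ if $A$ is an intersection of clopen subsets of $X$; a $\sigma$C-set is a countable union of C-sets in $X$. $X$ is almost zero-dimensional if every point of $X$ has a neighborhood basis consisting of C-sets in $X$. *)

(* Defs.v *)
From Stdlib Require Import Reals.
Open Scope R_scope.

Section Topo.
Variable X : Type.
Variable d : X -> X -> R.

Definition is_metric : Prop :=
  (forall x y, 0 <= d x y) /\
  (forall x y, d x y = 0 <-> x = y) /\
  (forall x y, d x y = d y x) /\
  (forall x y z, d x z <= d x y + d y z).

Definition separable : Prop :=
  exists D : X -> Prop,
    (exists f : X -> nat, forall a b, D a -> D b -> f a = f b -> a = b) /\
    (forall x r, 0 < r -> exists y, D y /\ d x y < r).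

Definition is_open (U : X -> Prop) : Prop :=
  forall x, U x -> exists r, 0 < r /\ forall y, d x y < r -> U y.

Definition is_closed (A : X -> Prop) : Prop := is_open (fun x => ~ A x).

Definition is_clopen (A : X -> Prop) : Prop := is_open A /\ is_closed A.

Definition C_set (A : X -> Prop) : Prop :=
  exists F : (X -> Prop) -> Prop,
    (forall U, F U -> is_clopen U) /\
    (forall x, A x <-> (forall U, F U -> U x)).

Definition sigmaC_set (A : X -> Prop) : Prop :=
  exists B : nat -> (X -> Prop),
    (forall n, C_set (B n)) /\
    (forall x, A x <-> exists n, B n x).

Definition neighborhood (x : X) (A : X -> Prop) : Prop :=
  exists r, 0 < r /\ forall y, d x y < r -> A y.

Definition almost_zero_dimensional : Prop :=
  forall x U, is_open U -> U x ->
    exists A, C_set A /\ neighborhood x A /\ (forall y, A y -> U y).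
End Topo.

(* Main.v *)
Require Import Defs.
From Stdlib Require Import Reals Lra Lia Classical ClassicalEpsilon.
From Stdlib Require Import Arith.Cantor.
Open Scope R_scope.

Lemma choice_nat {T : Type} (P : nat -> T -> Prop) :
  (forall n, exists t, P n t) -> exists f : nat -> T, forall n, P n (f n).
Proof.
  intros H. exists (fun n => proj1_sig (constructive_indefinite_description _ (H n))).
  intro n. exact (proj2_sig (constructive_indefinite_description _ (H n))).
Qed.

Lemma lindelof (X : Type) (d : X -> X -> R) (hmet : is_metric X d)
  (hsep : separable X d) (P : (X -> Prop) -> Prop) (P0 : P (fun _ => False))
  (Q : X -> Prop)
  (H : forall z, Q z -> exists S, P S /\ exists r, 0 < r /\ forall y, d z y < r -> S y) :
  exists Sq : nat -> (X -> Prop), (forall i, P (Sq i)) /\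
    forall z, Q z -> exists i r, 0 < r /\ forall y, d z y < r -> Sq i y.
Proof.
  destruct hmet as [dpos [dzero [dsym dtri]]].
  destruct hsep as [D [[f finj] Ddense]].
  set (cond := fun (p : nat * nat) (S : X -> Prop) =>
     P S /\ exists q, D q /\ f q = fst p /\ forall y, d q y < / INR (snd p) -> S y).
  assert (Hex : forall p, exists S, P S /\ (cond p S \/ ~ (exists S, cond p S))).
  { intro p. destruct (classic (exists S, cond p S)) as [[S HS]|HN].
    - exists S. split; [apply HS | left; exact HS].
    - exists (fun _ => False). split; [exact P0 | right; exact HN]. }
  destruct (choice_nat (fun n S => P S /\ (cond (of_nat n) S \/ ~ (exists S, cond (of_nat n) S))) (fun n => Hex (of_nat n))) as [Sq HSq].
  exists Sq. split; [intro i; apply HSq|].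
  intros z Qz. destruct (H z Qz) as [S [PS [r [rpos Hr]]]].
  destruct (archimed_cor1 (r/2)) as [N [HN Npos]]; [lra|].
  assert (HNpos : 0 < / INR N).
  { apply Rinv_0_lt_compat. apply lt_0_INR. exact Npos. }
  destruct (Ddense z (/ INR N) HNpos) as [q [Dq Hq]].
  exists (to_nat (f q, N)).
  assert (Hc : cond (f q, N) S).
  { split; [exact PS|]. exists q. split; [exact Dq|]. split; [reflexivity|].
    intros y Hy. apply Hr. simpl in Hy. specialize (dtri z q y). lra. }
  destruct (HSq (to_nat (f q, N))) as [_ [Hc2|Hc2]]; rewrite cancel_of_to in Hc2.
  - destruct Hc2 as [_ [q' [Dq' [Hf Hb]]]]. simpl in Hf, Hb.
    assert (q' = q) by (apply finj; auto). subst q'.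
    exists (/ INR N - d z q). split; [lra|].
    intros y Hy. apply Hb. specialize (dtri q z y). rewrite (dsym q z) in dtri. lra.
  - exfalso. apply Hc2. exists S. exact Hc.
Qed.

Lemma empty_clopen (X : Type) (d : X -> X -> R) : is_clopen X d (fun _ => False).
Proof.
  split.
  - intros x [].
  - intros x _. exists 1. split; [lra|]. intros y _ [].
Qed.

Lemma compl_clopen (X : Type) (d : X -> X -> R) U :
  is_clopen X d U -> is_clopen X d (fun x => ~ U x).
Proof.
  intros [Ho Hc]. split; [exact Hc|].
  intros x Hx. apply NNPP in Hx. destruct (Ho x Hx) as [r [rp Hr]].
  exists r. split; [exact rp|]. intros y Hy Hn. apply Hn. apply Hr. exact Hy.
Qed.

Lemma C_empty (X : Type) (d : X -> X -> R) : C_set X d (fun _ => False).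
Proof.
  exists (fun U => U = (fun _ => False)). split.
  - intros U ->. apply empty_clopen.
  - intro x. split; [intros []|]. intro H. apply (H (fun _ => False)). reflexivity.
Qed.

Lemma C_ext (X : Type) (d : X -> X -> R) (A B : X -> Prop) :
  (forall y, A y <-> B y) -> C_set X d A -> C_set X d B.
Proof.
  intros He [F [HF HA]]. exists F. split; [exact HF|].
  intro x. rewrite <- He. apply HA.
Qed.

Lemma C_union (X : Type) (d : X -> X -> R) (A B : X -> Prop) :
  C_set X d A -> C_set X d B -> C_set X d (fun y => A y \/ B y).
Proof.
  intros [F [HF HA]] [G [HG HB]].
  exists (fun W => exists U V, F U /\ G V /\ W = (fun y => U y \/ V y)). split.
  - intros W [U [V [FU [GV ->]]]]. destruct (HF U FU) as [Uo Uc]. destruct (HG V GV) as [Vo Vc].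
    split.
    + intros x [Ux|Vx].
      * destruct (Uo x Ux) as [r [rp Hr]]. exists r. split; auto.
      * destruct (Vo x Vx) as [r [rp Hr]]. exists r. split; auto.
    + intros x Hx. assert (~ U x) by tauto. assert (~ V x) by tauto.
      destruct (Uc x H) as [r1 [r1p H1]]. destruct (Vc x H0) as [r2 [r2p H2]].
      exists (Rmin r1 r2). split; [apply Rmin_pos; auto|].
      intros y Hy [Uy|Vy].
      * apply (H1 y); [apply Rlt_le_trans with (Rmin r1 r2); [exact Hy|apply Rmin_l]|exact Uy].
      * apply (H2 y); [apply Rlt_le_trans with (Rmin r1 r2); [exact Hy|apply Rmin_r]|exact Vy].
  - intro x. split.
    + intros [Ax|Bx] W [U [V [FU [GV ->]]]].
      * left. apply (proj1 (HA x) Ax U FU).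
      * right. apply (proj1 (HB x) Bx V GV).
    + intros H. destruct (classic (A x)) as [Ax|nAx]; [left; exact Ax|right].
      apply HB. intros V GV.
      assert (exists U, F U /\ ~ U x) as [U [FU nU]].
      { apply NNPP. intro Hn. apply nAx. apply HA. intros U FU.
        apply NNPP. intro nU. apply Hn. exists U. auto. }
      destruct (H (fun y => U y \/ V y)) as [Ux|Vx].
      * exists U, V. auto.
      * contradiction.
      * exact Vx.
Qed.

Lemma C_point_sep (X : Type) (d : X -> X -> R) (B : X -> Prop) z :
  C_set X d B -> ~ B z -> exists N, is_clopen X d N /\ N z /\ forall y, N y -> ~ B y.
Proof.
  intros [F [HF HB]] nB.
  assert (exists U, F U /\ ~ U z) as [U [FU nU]].
  { apply NNPP. intro Hn. apply nB. apply HB. intros U FU.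
    apply NNPP. intro nU. apply Hn. exists U. auto. }
  exists (fun y => ~ U y). split; [apply compl_clopen; auto|]. split; [exact nU|].
  intros y nUy By. apply nUy. exact (proj1 (HB y) By U FU).
Qed.

Lemma open_fin (X : Type) (d : X -> X -> R) (S : nat -> X -> Prop) y i :
  (forall k, is_closed X d (S k)) -> (forall k, (k < i)%nat -> ~ S k y) ->
  exists r, 0 < r /\ forall y', d y y' < r -> forall k, (k < i)%nat -> ~ S k y'.
Proof.
  intros Hc. induction i as [|i IH]; intros H.
  - exists 1. split; [lra|]. intros y' _ k Hk. lia.
  - destruct IH as [r1 [r1p H1]]. { intros k Hk. apply H. lia. }
    destruct (Hc i y (H i ltac:(lia))) as [r2 [r2p H2]].
    exists (Rmin r1 r2). split; [apply Rmin_pos; auto|].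
    intros y' Hy k Hk. destruct (Nat.eq_dec k i) as [->|Hne].
    + apply H2. apply Rlt_le_trans with (Rmin r1 r2); [exact Hy|apply Rmin_r].
    + apply H1; [apply Rlt_le_trans with (Rmin r1 r2); [exact Hy|apply Rmin_l]|lia].
Qed.

Lemma least_nat (P : nat -> Prop) n : P n -> exists m, P m /\ forall k, (k < m)%nat -> ~ P k.
Proof.
  revert n. induction n as [n IH] using (well_founded_induction Wf_nat.lt_wf). intros Pn.
  destruct (classic (exists k, (k < n)%nat /\ P k)) as [[k [Hk Pk]]|Hn].
  - exact (IH k Hk Pk).
  - exists n. split; [exact Pn|]. intros k Hk Pk. apply Hn. eauto.
Qed.

Lemma C_sep (X : Type) (d : X -> X -> R) (hmet : is_metric X d) (hsep : separable X d)
  (B G : X -> Prop) : C_set X d B -> C_set X d G -> (forall y, B y -> G y -> False) ->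
  exists N, is_clopen X d N /\ (forall y, B y -> N y) /\ (forall y, N y -> ~ G y).
Proof.
  intros CB CG Hdis.
  destruct (lindelof X d hmet hsep
     (fun R => is_clopen X d R /\ ((forall y, R y -> ~ B y) \/ (forall y, R y -> ~ G y)))
     ltac:(split; [apply empty_clopen| left; intros y []]) (fun _ => True)) as [Sq [HP Hcov]].
  { intros z _. destruct (classic (B z)) as [Bz|nBz].
    - assert (nG : ~ G z) by (intro; eauto).
      destruct (C_point_sep X d G z CG nG) as [N [[No Nc] [Nz HN]]].
      exists N. split; [split; [split; auto|right; exact HN]|]. apply No. exact Nz.
    - destruct (C_point_sep X d B z CB nBz) as [N [[No Nc] [Nz HN]]].
      exists N. split; [split; [split; auto|left; exact HN]|]. apply No. exact Nz. }
  set (R' := fun i y => Sq i y /\ forall k, (k < i)%nat -> ~ Sq k y).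
  assert (HR'open : forall i y, R' i y -> exists r, 0 < r /\ forall y', d y y' < r -> R' i y').
  { intros i y [Sy Hk]. destruct (open_fin X d Sq y i (fun k => proj2 (proj1 (HP k))) Hk) as [r1 [r1p H1]].
    destruct (proj1 (proj1 (HP i)) y Sy) as [r2 [r2p H2]].
    exists (Rmin r1 r2). split; [apply Rmin_pos; auto|]. intros y' Hy. split.
    + apply H2. apply Rlt_le_trans with (Rmin r1 r2); [exact Hy|apply Rmin_r].
    + apply H1. apply Rlt_le_trans with (Rmin r1 r2); [exact Hy|apply Rmin_l]. }
  assert (Hin : forall y, exists i, R' i y).
  { intro y. destruct (Hcov y I) as [i [r [rp Hr]]].
    assert (Sq i y) by (apply Hr; rewrite (proj2 (proj1 (proj2 hmet) y y) eq_refl); lra).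
    destruct (least_nat (fun i => Sq i y) i H) as [m [Hm Hl]]. exists m. split; auto. }
  assert (Huniq : forall i j y, R' i y -> R' j y -> i = j).
  { intros i j y [Si Hi] [Sj Hj]. destruct (Nat.lt_total i j) as [Hl|[He|Hl]]; auto.
    - exfalso. exact (Hj i Hl Si).
    - exfalso. exact (Hi j Hl Sj). }
  exists (fun y => exists i, R' i y /\ forall w, Sq i w -> ~ G w). split; [split|split].
  - intros y [i [Ri Hi]]. destruct (HR'open i y Ri) as [r [rp Hr]].
    exists r. split; auto. intros y' Hy. exists i. auto.
  - intros y Hy. destruct (Hin y) as [i Ri].
    destruct (HR'open i y Ri) as [r [rp Hr]]. exists r. split; auto.
    intros y' Hy' [j [Rj Hj]]. apply Hy. exists i. split; auto.
    rewrite (Huniq i j y' (Hr y' Hy') Rj). exact Hj.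
  - intros y By. destruct (Hin y) as [i Ri]. exists i. split; auto.
    destruct (proj2 (HP i)) as [HB|HG]; auto. exfalso. exact (HB y (proj1 Ri) By).
  - intros y [i [Ri Hi]]. exact (Hi y (proj1 Ri)).
Qed.

Theorem theorem4p4 (X : Type) (d : X -> X -> R)
  (hmet : is_metric X d) (hsep : separable X d)
  (hazd : almost_zero_dimensional X d)
  (A : X -> Prop) (hcl : is_closed X d A) (hsc : sigmaC_set X d A) :
  C_set X d A.
Proof.
  destruct hsc as [Bn [HBC HBA]].
  assert (Main : forall x, ~ A x -> exists U, is_clopen X d U /\ (forall y, A y -> U y) /\ ~ U x).
  { intros x nAx.
    destruct (hazd x (fun y => ~ A y) hcl nAx) as [W [CW [[r0 [r0p Hr0]] HWA]]].
    destruct (lindelof X d hmet hsep (fun V => C_set X d V /\ forall y, V y -> ~ A y)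
       ltac:(split; [apply C_empty|intros y []]) (fun z => ~ A z)) as [Wc [HWc Hcov]].
    { intros z nAz. destruct (hazd z (fun y => ~ A y) hcl nAz) as [V [CV [Vn HV]]].
      exists V. split; [split; auto|exact Vn]. }
    set (Gn := fun n y => W y \/ exists i, (i <= n)%nat /\ Wc i y).
    assert (CG : forall n, C_set X d (Gn n)).
    { intro n. apply C_union; [exact CW|].
      induction n as [|n IH].
      - apply (C_ext X d (Wc 0%nat)); [|apply HWc].
        intro y. split; [intro H; exists 0%nat; split; auto|].
        intros [i [Hi Hw]]. assert (i = 0%nat) by lia. subst. exact Hw.
      - apply (C_ext X d (fun y => (exists i, (i <= n)%nat /\ Wc i y) \/ Wc (S n) y)).
        + intro y. split.
          * intros [[i [Hi Hw]]|Hw]; [exists i; split; [lia|auto]|exists (S n); auto].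
          * intros [i [Hi Hw]]. destruct (Nat.eq_dec i (S n)) as [->|Hne]; [right; auto|].
            left. exists i. split; [lia|auto].
        + apply C_union; [exact IH|apply HWc]. }
    assert (HNex : forall n, exists N, is_clopen X d N /\ (forall y, Bn n y -> N y) /\ (forall y, N y -> ~ Gn n y)).
    { intro n. apply C_sep; auto.
      intros y By [Wy|[i [_ Hw]]].
      - exact (HWA y Wy (proj2 (HBA y) (ex_intro _ n By))).
      - exact (proj2 (HWc i) y Hw (proj2 (HBA y) (ex_intro _ n By))). }
    destruct (choice_nat _ HNex) as [N HN].
    exists (fun y => exists n, N n y). split; [split|split].
    - intros y [n Ny]. destruct (proj1 (proj1 (HN n)) y Ny) as [r [rp Hr]].
      exists r. split; auto. intros y' Hy'. exists n. auto.
    - intros y Hy.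
      assert (nAy : ~ A y).
      { intro Ay. apply HBA in Ay. destruct Ay as [n Bny]. apply Hy. exists n. apply (proj1 (proj2 (HN n))). exact Bny. }
      destruct (Hcov y nAy) as [i [r [rp Hr]]].
      destruct (open_fin X d N y i (fun k => proj2 (proj1 (HN k)))) as [r1 [r1p H1]].
      { intros k _ Nk. apply Hy. exists k. exact Nk. }
      exists (Rmin r r1). split; [apply Rmin_pos; auto|].
      intros y' Hy' [n Nn].
      destruct (Nat.lt_ge_cases n i) as [Hl|Hge].
      + refine (H1 y' _ n Hl Nn). apply Rlt_le_trans with (Rmin r r1); [exact Hy'|apply Rmin_r].
      + apply (proj2 (proj2 (HN n)) y' Nn). right. exists i. split; [lia|].
        apply Hr. apply Rlt_le_trans with (Rmin r r1); [exact Hy'|apply Rmin_l].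
    - intros y Ay. apply HBA in Ay. destruct Ay as [n Bny]. exists n. apply (proj1 (proj2 (HN n))). exact Bny.
    - intros [n Nn]. apply (proj2 (proj2 (HN n)) x Nn). left. apply Hr0.
      rewrite (proj2 (proj1 (proj2 hmet) x x) eq_refl); lra. }
  exists (fun U => is_clopen X d U /\ forall y, A y -> U y). split.
  - intros U [HU _]. exact HU.
  - intro x. split.
    + intros Ax U [_ HU]. auto.
    + intros H. apply NNPP. intro nAx. destruct (Main x nAx) as [U [HU [HAU nU]]].
      apply nU. apply H. split; auto.
Qed.
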